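(* Let $\mathcal{H}$ be a quasitriangular Hopf algebra with universal R-matrix $\mathcal{R}=\mathcal{R}_1\otimes\mathcal{R}_2$, and let $\mathcal{L}$ be a left $\mathcal{H}$-module algebra which is quasi-commutative, i.e. $(\mathcal{R}_2\triangleright\ell_2)(\mathcal{R}_1\triangleright\ell_1)=\ell_1\ell_2$ for all $\ell_1,\ell_2\in\mathcal{L}$. Then $\mathcal{L}$ is an $\mathcal{H}$-base algebra with the left $\mathcal{H}$-coaction $\delta(\ell):=\mathcal{R}_2\otimes\mathcal{R}_1\triangleright\ell$.
   Context: $\mathcal{H}$ is a Hopf algebra over a commutative ring $k$ (over a field of characteristic zero), with Sweedler notation $\Delta(x)=x^{(1)}\otimes x^{(2)}$; the universal R-matrix satisfies $\mathcal{R}\Delta(h)=\Delta^{op}(h)\mathcal{R}$, $(\Delta\otimes\mathrm{id})(\mathcal{R})=\mathcal{R}_{13}\mathcal{R}_{23}$, $(\mathrm{id}\otimes\Delta)(\mathcal{R})=\mathcal{R}_{13}\mathcal{R}_{12}$ (summation over the components of $\mathcal{R}$ implicit). An $\mathcal{H}$-base algebra is a left $\mathcal{H}$-module algebra and left $\mathcal{H}$-comodule algebra $\mathcal{L}$ (action $\triangleright$, coaction $\delta(\ell)=\ell^{(1)}\otimes\ell^{[2]}$ an algebra homomorphism) satisfying $\{x^{(1)}\triangleright\ell\}^{(1)}x^{(2)}\otimes\{x^{(1)}\triangleright\ell\}^{[2]}=x^{(1)}\ell^{(1)}\otimes x^{(2)}\triangleright\ell^{[2]}$ for all $x\in\mathcal{H}$,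 $\ell\in\mathcal{L}$, and $\ell_1\ell_2=(\ell_1^{(1)}\triangleright\ell_2)\ell_1^{[2]}$ for all $\ell_1,\ell_2\in\mathcal{L}$. *)

(* Defs.v *)
From HB Require Import structures.
From mathcomp Require Import all_boot all_order all_algebra.
Set Implicit Arguments. Unset Strict Implicit. Unset Printing Implicit Defensive.
Import GRing.Theory.
Local Open Scope ring_scope.

(* An element of A (x) B is represented by a finite formal sum,
   i.e. a list of pairs [a_i, b_i] standing for sum_i a_i (x) b_i.
   Two representatives are equal in A (x) B iff they have the same image under
   every k-bilinear map into every k-module (universal property of the
   tensor product); likewise for triple tensors with trilinear maps. *)

Section Tensors.
Variable k : comNzRingType.

Definition bilin (A B M : lmodType k) (f : A -> B -> M) : Prop :=
  (forall b, linear (fun a => f a b)) /\ (forall a, linear (f a)).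

Definition trilin (A B C M : lmodType k) (f : A -> B -> C -> M) : Prop :=
  [/\ forall b c, linear (fun a => f a b c),
      forall a c, linear (fun b => f a b c)
    & forall a b, linear (f a b)].

Definition teq2 (A B : lmodType k) (s t : seq (A * B)) : Prop :=
  forall (M : lmodType k) (f : A -> B -> M), bilin f ->
    \sum_(p <- s) f p.1 p.2 = \sum_(p <- t) f p.1 p.2.

Definition teq3 (A B C : lmodType k) (s t : seq (A * B * C)) : Prop :=
  forall (M : lmodType k) (f : A -> B -> C -> M), trilin f ->
    \sum_(p <- s) f p.1.1 p.1.2 p.2 = \sum_(p <- t) f p.1.1 p.1.2 p.2.

Definition tmul (A B : algType k) (s t : seq (A * B)) : seq (A * B) :=
  [seq (p.1 * q.1, p.2 * q.2) | p <- s, q <- t].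

Definition tlin (A B : lmodType k) (c : k) (s t : seq (A * B)) : seq (A * B) :=
  [seq (c *: p.1, p.2) | p <- s] ++ t.

End Tensors.

(* Hopf algebra (H, Delta, eps, S) over k; Delta x is a representative of
   Delta(x) = x^(1) (x) x^(2) in H (x) H. *)
Record is_hopf_algebra (k : comNzRingType) (H : algType k)
    (Delta : H -> seq (H * H)) (eps : H -> k) (S : H -> H) : Prop := {
  hopf_Delta_linear : forall c x y,
    teq2 (Delta (c *: x + y)) (tlin c (Delta x) (Delta y));
  hopf_Delta_mul : forall x y, teq2 (Delta (x * y)) (tmul (Delta x) (Delta y));
  hopf_Delta_one : teq2 (Delta 1) [:: (1, 1)];
  hopf_coassoc : forall x,
    teq3 [seq ((q.1, q.2), p.2) | p <- Delta x, q <- Delta p.1]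
         [seq ((p.1, q.1), q.2) | p <- Delta x, q <- Delta p.2];
  hopf_eps_linear : forall c x y, eps (c *: x + y) = c * eps x + eps y;
  hopf_eps_mul : forall x y, eps (x * y) = eps x * eps y;
  hopf_eps_one : eps 1 = 1;
  hopf_counit_l : forall x, \sum_(p <- Delta x) eps p.1 *: p.2 = x;
  hopf_counit_r : forall x, \sum_(p <- Delta x) eps p.2 *: p.1 = x;
  hopf_S_linear : linear S;
  hopf_antipode_l : forall x, \sum_(p <- Delta x) S p.1 * p.2 = eps x *: 1;
  hopf_antipode_r : forall x, \sum_(p <- Delta x) p.1 * S p.2 = eps x *: 1
}.

Record is_R_matrix (k : comNzRingType) (H : algType k)
    (Delta : H -> seq (H * H)) (R : seq (H * H)) : Prop := {
  Rmat_comm : forall h,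
    teq2 (tmul R (Delta h)) (tmul [seq (p.2, p.1) | p <- Delta h] R);
  (* (Delta (x) id)(R) = R13 R23 *)
  Rmat_Delta_l :
    teq3 [seq ((q.1, q.2), r.2) | r <- R, q <- Delta r.1]
         [seq ((r.1, r'.1), r.2 * r'.2) | r <- R, r' <- R];
  (* (id (x) Delta)(R) = R13 R12 *)
  Rmat_Delta_r :
    teq3 [seq ((r.1, q.1), q.2) | r <- R, q <- Delta r.2]
         [seq ((r.1 * r'.1, r'.2), r.2) | r <- R, r' <- R]
}.

Record is_module_algebra (k : comNzRingType) (H L : algType k)
    (Delta : H -> seq (H * H)) (eps : H -> k) (act : H -> L -> L) : Prop := {
  modalg_bilin : bilin act;
  modalg_one : forall l, act 1 l = l;
  modalg_mul : forall h g l, act (h * g) l = act h (act g l);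
  modalg_act_mul : forall h l l',
    act h (l * l') = \sum_(p <- Delta h) act p.1 l * act p.2 l';
  modalg_act_one : forall h, act h 1 = eps h *: 1
}.

Definition quasi_commutative (k : comNzRingType) (H L : algType k)
    (R : seq (H * H)) (act : H -> L -> L) : Prop :=
  forall l1 l2 : L, \sum_(r <- R) act r.2 l2 * act r.1 l1 = l1 * l2.

Record is_comodule_algebra (k : comNzRingType) (H L : algType k)
    (Delta : H -> seq (H * H)) (eps : H -> k) (delta : L -> seq (H * L)) : Prop := {
  comod_linear : forall c l l',
    teq2 (delta (c *: l + l')) (tlin c (delta l) (delta l'));
  comod_coassoc : forall l,
    teq3 [seq ((q.1, q.2), p.2) | p <- delta l, q <- Delta p.1]
         [seq ((p.1, q.1), q.2) | p <- delta l, q <- delta p.2];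
  comod_counit : forall l, \sum_(p <- delta l) eps p.1 *: p.2 = l;
  comod_mul : forall l l', teq2 (delta (l * l')) (tmul (delta l) (delta l'));
  comod_one : teq2 (delta 1) [:: (1, 1)]
}.

Definition is_base_algebra (k : comNzRingType) (H L : algType k)
    (Delta : H -> seq (H * H)) (eps : H -> k)
    (act : H -> L -> L) (delta : L -> seq (H * L)) : Prop :=
  [/\ is_module_algebra Delta eps act,
      is_comodule_algebra Delta eps delta,
      (forall (x : H) (l : L),
         teq2 [seq (q.1 * p.2, q.2) | p <- Delta x, q <- delta (act p.1 l)]
              [seq (p.1 * q.1, act p.2 q.2) | p <- Delta x, q <- delta l])
    &
      (forall l1 l2 : L, l1 * l2 = \sum_(p <- delta l1) act p.1 l2 * p.2)].

Definition Rcoaction (k : comNzRingType) (H L : algType k)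
    (R : seq (H * H)) (act : H -> L -> L) (l : L) : seq (H * L) :=
  [seq (r.2, act r.1 l) | r <- R].

(* Main.v *)
Require Import Defs.
From HB Require Import structures.
From mathcomp Require Import all_boot all_order all_algebra.
Set Implicit Arguments. Unset Strict Implicit. Unset Printing Implicit Defensive.
Import GRing.Theory.
Local Open Scope ring_scope.

Lemma lin0 (k : comNzRingType) (U V : lmodType k) (f : U -> V) :
  linear f -> f 0 = 0.
Proof.
move=> hf; have := hf 1 0 0; rewrite scaler0 addr0 scale1r => h.
by apply: (addrI (f 0)); rewrite addr0 -h.
Qed.

Lemma linD (k : comNzRingType) (U V : lmodType k) (f : U -> V) u v :
  linear f -> f (u + v) = f u + f v.
Proof. by move=> hf; have := hf 1 u v; rewrite !scale1r. Qed.

Lemma linZ (k : comNzRingType) (U V : lmodType k) (f : U -> V) a u :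
  linear f -> f (a *: u) = a *: f u.
Proof. by move=> hf; have := hf a u 0; rewrite addr0 (lin0 hf) addr0. Qed.

Lemma lin_sum (k : comNzRingType) (U V : lmodType k) (f : U -> V)
   (I : Type) (s : seq I) (F : I -> U) :
  linear f -> f (\sum_(i <- s) F i) = \sum_(i <- s) f (F i).
Proof.
move=> hf; elim: s => [|x s IH]; first by rewrite !big_nil (lin0 hf).
by rewrite !big_cons (linD _ _ hf) IH.
Qed.

Lemma lin_comp (k : comNzRingType) (U V W : lmodType k) (f : V -> W) (g : U -> V) :
  linear f -> linear g -> linear (fun x => f (g x)).
Proof. by move=> hf hg a u v; rewrite hg hf. Qed.

Lemma lin_mulr (k : comNzRingType) (A : algType k) (y : A) :
  linear (fun x : A => x * y).
Proof. by move=> a u v; rewrite mulrDl scalerAl. Qed.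

Lemma lin_mull (k : comNzRingType) (A : algType k) (y : A) :
  linear (fun x : A => y * x).
Proof. by move=> a u v; rewrite mulrDr scalerAr. Qed.

Lemma lin_scale (k : comNzRingType) (V : lmodType k) (c : k) :
  linear (fun x : V => c *: x).
Proof. by move=> a u v; rewrite scalerDr !scalerA mulrC. Qed.

Section Scal.
Lemma sc0 (k : comNzRingType) (U : lmodType k) (e : U -> k) :
  (forall c x y, e (c *: x + y) = c * e x + e y) -> e 0 = 0.
Proof.
move=> he; have := he 1 0 0; rewrite scaler0 addr0 mul1r => h.
by apply: (addrI (e 0)); rewrite addr0 -h.
Qed.

Lemma scD (k : comNzRingType) (U : lmodType k) (e : U -> k) u v :
  (forall c x y, e (c *: x + y) = c * e x + e y) -> e (u + v) = e u + e v.
Proof. by move=> he; have := he 1 u v; rewrite scale1r mul1r. Qed.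

Lemma scZ (k : comNzRingType) (U : lmodType k) (e : U -> k) a u :
  (forall c x y, e (c *: x + y) = c * e x + e y) -> e (a *: u) = a * e u.
Proof. by move=> he; have := he a u 0; rewrite addr0 (sc0 he) addr0. Qed.

Lemma sc_sum (k : comNzRingType) (U : lmodType k) (e : U -> k)
   (I : Type) (s : seq I) (F : I -> U) :
  (forall c x y, e (c *: x + y) = c * e x + e y) ->
  e (\sum_(i <- s) F i) = \sum_(i <- s) e (F i).
Proof.
move=> he; elim: s => [|x s IH]; first by rewrite !big_nil (sc0 he).
by rewrite !big_cons (scD _ _ he) IH.
Qed.

Lemma lin_sc (k : comNzRingType) (U V : lmodType k) (e : U -> k) (m : V) :
  (forall c x y, e (c *: x + y) = c * e x + e y) -> linear (fun x => e x *: m).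
Proof. by move=> he a u v; rewrite he scalerDl scalerA. Qed.
End Scal.


Theorem proposition3p6 (k : comNzRingType) (H L : algType k)
    (Delta : H -> seq (H * H)) (eps : H -> k) (S : H -> H)
    (R : seq (H * H)) (act : H -> L -> L) :
  is_hopf_algebra Delta eps S ->
  is_R_matrix Delta R ->
  is_module_algebra Delta eps act ->
  quasi_commutative R act ->
  is_base_algebra Delta eps act (Rcoaction R act).
Proof.
move=> hH hR hM hQ.
have hM' := hM.
case: hM' => [[actL actR] act1 actM actmul actone].
have epsL := hopf_eps_linear hH.
split => //; last first.
- by move=> l1 l2; rewrite /Rcoaction big_map hQ.
- move=> x l M f [fL fR].
  have bl : bilin (fun a b => f b (act a l)).
    split=> [b|a]; last exact: fL.
    exact: lin_comp (fR b) (actL l).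
  have := Rmat_comm hR x bl. rewrite /tmul !big_allpairs_dep /= big_map /=.
  rewrite /Rcoaction.
  under eq_bigr => r _ do under eq_bigr => p _ do rewrite actM.
  under [RHS]eq_bigr => p _ do under eq_bigr => r _ do rewrite actM.
  rewrite exchange_big /= => E.
  under eq_bigr => p _ do rewrite big_map.
  under [RHS]eq_bigr => p _ do rewrite big_map.
  exact: E.
split.
- move=> c l l' M f [fL fR].
  rewrite /Rcoaction /tlin big_cat !big_map /= -big_split /=.
  apply: eq_bigr => r _.
  by rewrite actR fR (linZ _ _ (fL _)).
- move=> l M f [fA fB fC].
  have tg : trilin (fun a b c => f b c (act a l)).
    split=> [b c|a c|a b]; [exact: lin_comp (fC b c) (actL l) | exact: fA | exact: fB].
  have := Rmat_Delta_r hR tg; rewrite !big_allpairs_dep /= => E.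
  rewrite /Rcoaction ?big_allpairs_dep /= ?big_map /=.
  rewrite E.
  under eq_bigr => r _ do under eq_bigr => r' _ do rewrite actM.
  under [RHS]eq_bigr => r _ do rewrite big_map.
  by rewrite exchange_big.
- move=> l; rewrite /Rcoaction big_map /= -[RHS]mulr1 -(hQ l 1).
  by apply: eq_bigr => r _; rewrite actone -scalerAl mul1r.
- move=> l l' M f [fL fR].
  have tg : trilin (fun a b c => f c (act a l * act b l')).
    split=> [b c|a c|a b].
    + exact: lin_comp (fR c) (lin_comp (lin_mulr _) (actL l)).
    + exact: lin_comp (fR c) (lin_comp (lin_mull _) (actL l')).
    + exact: fL.
  have := Rmat_Delta_l hR tg; rewrite !big_allpairs_dep /= => E.
  rewrite /Rcoaction /tmul ?big_allpairs_dep ?big_map /=.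
  under eq_bigr => r _ do rewrite actmul (lin_sum _ _ (fR _)).
  rewrite E.
  by under [RHS]eq_bigr => r _ do rewrite big_map.
move=> M f [fL fR].
rewrite /Rcoaction big_map big_seq1 /=.
pose c := \sum_(r <- R) eps r.1 * eps r.2.
pose v := \sum_(r <- R) eps r.1 *: r.2.
have cL : c *: (1 : L) = 1.
  rewrite /c scaler_suml -[RHS]mulr1 -(hQ 1 1).
  apply: eq_bigr => r _; rewrite !actone -scalerAl mul1r scalerA.
  by rewrite mulrC.
have Phi : forall (N : lmodType k) (F : H -> H -> N), bilin F ->
    \sum_(q <- Delta v) F q.1 q.2 = F v v.
  move=> N F bF.
  have PhiL : linear (fun x => \sum_(q <- Delta x) F q.1 q.2).
    move=> a x y /=; rewrite (hopf_Delta_linear hH a x y bF) /tlin big_cat big_map /=.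
    rewrite scaler_sumr; congr (_ + _); apply: eq_bigr => q _.
    exact: (linZ _ _ (bF.1 _)).
  have tg : trilin (fun a b d => eps a *: F b d).
    split=> [b d|a d|a b].
    + exact: lin_sc epsL.
    + exact: lin_comp (lin_scale _) (bF.1 d).
    + exact: lin_comp (lin_scale _) (bF.2 b).
  have := Rmat_Delta_r hR tg; rewrite !big_allpairs_dep /= => E.
  rewrite /v (lin_sum _ _ PhiL) /=.
  under eq_bigr => r _ do rewrite (linZ _ _ PhiL) /= scaler_sumr.
  rewrite E.
  rewrite (lin_sum _ _ (bF.1 _)) /=.
  under [RHS]eq_bigr => r _ do rewrite (linZ _ _ (bF.1 _)) (lin_sum _ _ (bF.2 _)) scaler_sumr.
  rewrite exchange_big /=; apply: eq_bigr => r _; apply: eq_bigr => r' _.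
  by rewrite (linZ _ _ (bF.2 _)) scalerA (hopf_eps_mul hH) mulrC.
have epsD2 : forall x, \sum_(q <- Delta x) eps q.1 * eps q.2 = eps x.
  move=> x; have := congr1 eps (hopf_counit_l hH x).
  rewrite (sc_sum _ _ epsL) => <-; apply: eq_bigr => q _.
  by rewrite (scZ _ _ epsL).
have vv : v * v = v.
  have tg : trilin (fun a b d => (eps a * eps b) *: (d : H)).
    split=> [b d|a d|a b].
    + by move=> a x y; rewrite /= epsL mulrDl scalerDl !scalerA mulrA.
    + by move=> a' x y; rewrite /= epsL mulrDr scalerDl !scalerA mulrCA.
    + exact: lin_scale.
  have := Rmat_Delta_l hR tg; rewrite !big_allpairs_dep /= => E.
  transitivity (\sum_(r <- R) \sum_(r' <- R) (eps r.1 * eps r'.1) *: (r.2 * r'.2)).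
    rewrite /v mulr_suml; apply: eq_bigr => r _; rewrite mulr_sumr.
    by apply: eq_bigr => r' _; rewrite -scalerAl -scalerAr scalerA.
  rewrite -E /v; apply: eq_bigr => r _.
  by rewrite -scaler_suml epsD2.
have epsv : eps v = c.
  rewrite /v (sc_sum _ _ epsL); apply: eq_bigr => r _; exact: (scZ _ _ epsL).
have d : v = eps v *: v.
  have bF : bilin (fun a b : H => eps a *: b).
    split=> [b|a]; [exact: lin_sc epsL | exact: lin_scale].
  by rewrite -{1}(hopf_counit_l hH v) (Phi _ _ bF).
have e : S v * v = eps v *: 1.
  have bF : bilin (fun a b : H => S a * b).
    split=> [b|a]; [exact: lin_comp (lin_mulr _) (hopf_S_linear hH) | exact: lin_mull].
  by rewrite -(hopf_antipode_l hH v) (Phi _ _ bF).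
have e2 : c *: (1 : H) = c *: v.
  rewrite -epsv -e -{2}vv mulrA e -scalerAl mul1r //.
have vE : v = c *: 1.
  by rewrite {1}d epsv e2.
transitivity (f v 1); last first.
  by rewrite vE (linZ _ _ (fL _)) -(linZ _ _ (fR _)) cL.
rewrite /v (lin_sum _ _ (fL 1)) /=; apply: eq_bigr => r _.
by rewrite actone (linZ _ _ (fR _)) (linZ _ _ (fL _)).
Qed.
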